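(* Let $\xi=(\xi_0\xi_1\ldots\xi_{m-1})^{\mathbb Z}\in\Sigma_2\setminus\{0^{\mathbb Z}\}$ be a periodic sequence such that the map $g=f_{[\xi_0\ldots\xi_{m-1}]}$ has a repelling fixed point $q$. Then $I_{[\xi]}$ is a non-trivial interval, and it contains points $p_\infty<q<\widetilde p_\infty$ which are fixed points of $g^2$.
   Context: Let $f_0,f_1\colon[0,1]\to[0,1]$ be $C^1$ injective maps such that: (F0.i) $f_0$ is increasing and has exactly two fixed points $0$ and $1$, both hyperbolic, with $f_0'(0)=\beta>1$, $f_0'(1)=\lambda\in(0,1)$ and $\lambda\le f_0'(x)\le\beta$ for all $x\in[0,1]$; (F0.ii) there are intervals $I_0=[a_0,b_0]\subset(0,1)$ with $b_0=f_0(a_0)$ and $I_1=[a_1,b_1]$ with $b_1=f_0(a_1)$, and numbers $\alpha>1$, $N\ge1$, with $f_0^N(I_0)=I_1$ and $\lambda\,(f_0^N)'(x)>\alpha$ for all $x\in I_0$; moreover $f_0$ is expanding on $[0,b_0]$ and contracting on $[a_1,1]$; (F1.i) $f_1$ is decreasing with $\gamma'=\min_{[0,1]}|f_1'|\le\gamma=\max_{[0,1]}|f_1'|<1$; (F1.ii) $|f_1'(x)|\ge\bar\alpha>1/\alpha$ for all $x\in[f_1^2(a_1),a_1]$; (F01) $f_1(1)=0$, $f_1([a_1,1])\subset[0,a_0)$, and $[0,f_0^{-2}(b_0))\subset f_1([0,1])$. For a finite word, $f_{[\xi_0\ldots\xi_n]}=f_{\xi_n}\circ\cdots\circ f_{\xi_0}$.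 $\Sigma_2=\{0,1\}^{\mathbb Z}$; $(\xi_0\ldots\xi_{m-1})^{\mathbb Z}$ is the periodic sequence with $\xi_{i+m}=\xi_i$ for all $i$. For $\xi\in\Sigma_2$ the admissible domain is $I_{[\xi]}=\bigcap_{k\ge1}f_{\xi_{-1}}\circ\cdots\circ f_{\xi_{-k}}([0,1])$ (a point or a non-trivial compact interval). *)

(* Defs.v *)
From Stdlib Require Import Reals Lra ZArith List.
From Coquelicot Require Import Coquelicot.
Open Scope R_scope.

Definition I01 (x : R) : Prop := 0 <= x <= 1.

(* f is C^1 on [0,1]: differentiable at every point of [0,1] (f is a map R -> R,
   only its restriction to [0,1] matters) and the derivative,
   restricted to [0,1], is continuous. *)
Definition C1_on01 (f : R -> R) : Prop :=
  (forall x, I01 x -> ex_derive f x) /\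
  (forall x, I01 x -> filterlim (Derive f) (within I01 (locally x)) (locally (Derive f x))).

Definition maps01 (f : R -> R) : Prop := forall x, I01 x -> I01 (f x).
Definition inj01 (f : R -> R) : Prop :=
  forall x y, I01 x -> I01 y -> f x = f y -> x = y.

Definition iter (n : nat) (f : R -> R) : R -> R := fun x => Nat.iter n f x.

Definition fsym (f0 f1 : R -> R) (b : bool) : R -> R := if b then f1 else f0.

(* f_[xi_0 ... xi_n] = f_{xi_n} o ... o f_{xi_0} : xi_0 is applied first *)
Definition fword (f0 f1 : R -> R) (w : list bool) : R -> R :=
  fun x => fold_left (fun y b => fsym f0 f1 b y) w x.

Definition periodic_seq (w : list bool) : Z -> bool :=
  fun i => nth (Z.to_nat (i mod Z.of_nat (length w))) w false.

(* backward composition  f_{xi_{-1}} o ... o f_{xi_{-k}} *)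
Fixpoint back_comp (f0 f1 : R -> R) (xi : Z -> bool) (k : nat) : R -> R :=
  match k with
  | O => fun x => x
  | S k' => fun x => back_comp f0 f1 xi k' (fsym f0 f1 (xi (- Z.of_nat (S k'))%Z) x)
  end.

(* admissible domain I_[xi] = bigcap_{k>=1} f_{xi_{-1}} o ... o f_{xi_{-k}} ([0,1]) *)
Definition adm_domain (f0 f1 : R -> R) (xi : Z -> bool) : R -> Prop :=
  fun y => forall k : nat, (1 <= k)%nat ->
    exists x, I01 x /\ back_comp f0 f1 xi k x = y.

Definition standing_hyps (f0 f1 : R -> R)
  (beta lambda a0 b0 a1 b1 alpha : R) (N : nat) (gamma' gamma alphabar : R) : Prop :=
  C1_on01 f0 /\ C1_on01 f1 /\ maps01 f0 /\ maps01 f1 /\ inj01 f0 /\ inj01 f1 /\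
  (forall x y, I01 x -> I01 y -> x < y -> f0 x < f0 y) /\
  (forall x, I01 x -> (f0 x = x <-> (x = 0 \/ x = 1))) /\
  Derive f0 0 = beta /\ beta > 1 /\
  Derive f0 1 = lambda /\ 0 < lambda < 1 /\
  (forall x, I01 x -> lambda <= Derive f0 x <= beta) /\
  0 < a0 /\ a0 <= b0 /\ b0 < 1 /\ b0 = f0 a0 /\
  a1 <= b1 /\ b1 = f0 a1 /\
  alpha > 1 /\ (1 <= N)%nat /\
  (forall y, a1 <= y <= b1 <-> exists x, a0 <= x <= b0 /\ iter N f0 x = y) /\
  (forall x, a0 <= x <= b0 -> lambda * Derive (iter N f0) x > alpha) /\
  (forall x, 0 <= x <= b0 -> Derive f0 x > 1) /\
  (forall x, a1 <= x <= 1 -> Derive f0 x < 1) /\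
  (forall x y, I01 x -> I01 y -> x < y -> f1 x > f1 y) /\
  (forall x, I01 x -> gamma' <= Rabs (Derive f1 x)) /\
  (exists x, I01 x /\ Rabs (Derive f1 x) = gamma') /\
  (forall x, I01 x -> Rabs (Derive f1 x) <= gamma) /\
  (exists x, I01 x /\ Rabs (Derive f1 x) = gamma) /\
  gamma < 1 /\
  alphabar > 1 / alpha /\
  (forall x, f1 (f1 a1) <= x <= a1 -> Rabs (Derive f1 x) >= alphabar) /\
  f1 1 = 0 /\
  (forall x, a1 <= x <= 1 -> 0 <= f1 x < a0) /\
  (forall c y, I01 c -> f0 (f0 c) = b0 -> 0 <= y < c ->
     exists x, I01 x /\ f1 x = y).

(* Main.v *)
Require Import Defs.
From Stdlib Require Import Reals Lra Lia ZArith List Ranalysis5.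
From Coquelicot Require Import Coquelicot.
Open Scope R_scope.

Lemma IVT1 (f : R -> R) (u v y : R) :
  (forall t, u <= t <= v -> continuity_pt f t) -> u <= v ->
  f u <= y <= f v -> exists z, u <= z <= v /\ f z = y.
Proof.
  intros Hc Huv Hy.
  destruct (Req_dec (f u) y) as [E|E]. { exists u; split; [lra|auto]. }
  destruct (Req_dec (f v) y) as [E'|E']. { exists v; split; [lra|auto]. }
  assert (Hlt : u < v).
  { destruct (Req_dec u v); [subst; lra|lra]. }
  destruct (IVT_interv (fun t => f t - y) u v) as [z [Hz1 Hz2]]; auto; try lra.
  intros a Ha. apply continuity_pt_minus; auto. apply continuity_pt_const. intros ? ?; auto.
  exists z; split; auto; lra.
Qed.

Lemma IVT2 (f : R -> R) (u v y : R) :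
  (forall t, u <= t <= v -> continuity_pt f t) -> u <= v ->
  (f u <= y <= f v \/ f v <= y <= f u) -> exists z, u <= z <= v /\ f z = y.
Proof.
  intros Hc Huv [Hy|Hy]. apply IVT1; auto.
  destruct (IVT1 (fun t => - f t) u v (- y)) as [z [Hz Hz']]; auto; try lra.
  intros t Ht. apply continuity_pt_opp; auto.
  exists z; split; auto; lra.
Qed.

Lemma exd_cont (f : R -> R) x : ex_derive f x -> continuity_pt f x.
Proof.
  intro H. apply continuity_pt_filterlim. apply (ex_derive_continuous f x H).
Qed.

Definition mono01 (h : R -> R) : Prop :=
  (forall x y, I01 x -> I01 y -> x < y -> h x < h y) \/
  (forall x y, I01 x -> I01 y -> x < y -> h x > h y).

Definition good (h : R -> R) : Prop :=
  (forall x, I01 x -> I01 (h x)) /\ (forall x, I01 x -> ex_derive h x) /\ mono01 h.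

Lemma good_comp h1 h2 : good h1 -> good h2 -> good (fun x => h2 (h1 x)).
Proof.
  intros [A1 [B1 C1]] [A2 [B2 C2]]. split; [|split].
  - intros x Hx; auto.
  - intros x Hx. apply ex_derive_comp; auto.
  - destruct C1 as [C1|C1]; destruct C2 as [C2|C2]; [left|right|right|left];
      intros x y Hx Hy Hxy; simpl.
    + apply C2; auto.
    + apply C2; auto.
    + unfold Rgt. apply C2; auto. apply C1; auto.
    + unfold Rgt. apply C2; auto. apply C1; auto.
Qed.

Lemma good_ext h h' : (forall x, h x = h' x) -> good h -> good h'.
Proof.
  intros E [A [B C]]. split; [|split].
  - intros x Hx; rewrite <- E; auto.
  - intros x Hx; apply (ex_derive_ext h); auto.
  - destruct C as [C|C]; [left|right]; intros x y Hx Hy Hxy; rewrite <- !E; auto.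
Qed.

Lemma good_id : good (fun x => x).
Proof.
  split; [|split]. auto. intros; apply ex_derive_id. left; auto.
Qed.
Lemma good_fsym f0 f1 b : good f0 -> good f1 -> good (fsym f0 f1 b).
Proof. destruct b; simpl; auto. Qed.

Lemma good_back f0 f1 xi k : good f0 -> good f1 -> good (back_comp f0 f1 xi k).
Proof.
  intros G0 G1. induction k as [|k IH]; simpl.
  - apply good_id.
  - apply (good_comp (fsym f0 f1 (xi (- Z.of_nat (S k))%Z)) (back_comp f0 f1 xi k)); auto.
    apply good_fsym; auto.
Qed.

Lemma good_fword f0 f1 w : good f0 -> good f1 -> good (fword f0 f1 w).
Proof.
  intros G0 G1. induction w as [|b w IH].
  - apply good_id.
  - apply (good_ext (fun x => fword f0 f1 w (fsym f0 f1 b x))).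
    + intros x. reflexivity.
    + apply good_comp; auto. apply good_fsym; auto.
Qed.

Lemma good_weak h : good h ->
  (forall x y, I01 x -> I01 y -> x <= y -> h x <= h y) \/
  (forall x y, I01 x -> I01 y -> x <= y -> h y <= h x).
Proof.
  intros [_ [_ [C|C]]]; [left|right]; intros x y Hx Hy Hxy;
  destruct (Req_dec x y); [subst; lra| |subst; lra|];
  assert (x < y) by lra; specialize (C x y Hx Hy H0); lra.
Qed.

Lemma good_image h : good h -> forall y,
  (exists x, I01 x /\ h x = y) <-> Rmin (h 0) (h 1) <= y <= Rmax (h 0) (h 1).
Proof.
  intros G y. assert (H0: I01 0) by (unfold I01; lra).
  assert (H1: I01 1) by (unfold I01; lra).
  split.
  - intros [x [Hx <-]]. destruct (good_weak h G) as [W|W].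
    + pose proof (W 0 x H0 Hx (proj1 Hx)). pose proof (W x 1 Hx H1 (proj2 Hx)).
      unfold Rmin, Rmax; destruct (Rle_dec (h 0) (h 1)); lra.
    + pose proof (W 0 x H0 Hx (proj1 Hx)). pose proof (W x 1 Hx H1 (proj2 Hx)).
      unfold Rmin, Rmax; destruct (Rle_dec (h 0) (h 1)); lra.
  - intros Hy. destruct G as [A [B C]].
    destruct (IVT2 h 0 1 y) as [z [Hz Hz']]; try lra.
    + intros t Ht. apply exd_cont. apply B. exact Ht.
    + unfold Rmin, Rmax in Hy; destruct (Rle_dec (h 0) (h 1)); lra.
    + exists z; split; auto.
Qed.

Definition shift (n : nat) (xi : Z -> bool) : Z -> bool := fun i => xi (i - Z.of_nat n)%Z.

Lemma back_comp_S f0 f1 xi k x :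
  back_comp f0 f1 xi (S k) x = back_comp f0 f1 xi k (fsym f0 f1 (xi (- Z.of_nat (S k))%Z) x).
Proof. reflexivity. Qed.

Lemma back_split f0 f1 xi n k x :
  back_comp f0 f1 xi (k + n) x = back_comp f0 f1 xi n (back_comp f0 f1 (shift n xi) k x).
Proof.
  revert x. induction k as [|k IH]; intros x.
  - reflexivity.
  - change (S k + n)%nat with (S (k + n)). rewrite !back_comp_S, IH.
    unfold shift. do 3 f_equal. f_equal. lia.
Qed.

Lemma back_ext f0 f1 xi xi' k x : (forall i, xi i = xi' i) ->
  back_comp f0 f1 xi k x = back_comp f0 f1 xi' k x.
Proof.
  intros E. revert x; induction k as [|k IH]; intros x; auto.
  rewrite !back_comp_S, E. apply IH.
Qed.

Lemma back_fword f0 f1 w : forall xi,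
  (forall i, (i < length w)%nat -> xi (- Z.of_nat (length w) + Z.of_nat i)%Z = nth i w false) ->
  forall x, back_comp f0 f1 xi (length w) x = fword f0 f1 w x.
Proof.
  induction w as [|b w IH] using rev_ind; intros xi Hxi x.
  - reflexivity.
  - rewrite length_app. simpl length. rewrite (back_split f0 f1 xi 1 (length w) x).
    rewrite (IH (shift 1 xi)).
    + unfold fword. rewrite fold_left_app. simpl.
      assert (E : xi (- Z.of_nat 1)%Z = b).
      { specialize (Hxi (length w)). rewrite length_app in Hxi. simpl length in Hxi.
        rewrite app_nth2, Nat.sub_diag in Hxi by lia. simpl in Hxi.
        rewrite <- Hxi by lia. f_equal. lia. }
      simpl in E |- *. rewrite E. reflexivity.
    + intros i Hi. unfold shift. specialize (Hxi i). rewrite length_app in Hxi. simpl length in Hxi.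
      rewrite app_nth1 in Hxi by lia. rewrite <- Hxi by lia. f_equal. lia.
Qed.

Lemma periodic_shift w i : (1 <= length w)%nat ->
  periodic_seq w (i - Z.of_nat (length w))%Z = periodic_seq w i.
Proof.
  intros Hm. unfold periodic_seq. f_equal. f_equal.
  replace (i - Z.of_nat (length w))%Z with (i + (-1) * Z.of_nat (length w))%Z by lia.
  apply Z_mod_plus_full.
Qed.

Lemma back_periodic_m f0 f1 w x : (1 <= length w)%nat ->
  back_comp f0 f1 (periodic_seq w) (length w) x = fword f0 f1 w x.
Proof.
  intros Hm. apply back_fword. intros i Hi. unfold periodic_seq.
  f_equal. replace (- Z.of_nat (length w) + Z.of_nat i)%Z with (Z.of_nat i + (-1) * Z.of_nat (length w))%Z by lia.
  rewrite Z_mod_plus_full, Z.mod_small by lia. apply Nat2Z.id.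
Qed.

Lemma back_periodic_add f0 f1 w k x : (1 <= length w)%nat ->
  back_comp f0 f1 (periodic_seq w) (k + length w) x =
  fword f0 f1 w (back_comp f0 f1 (periodic_seq w) k x).
Proof.
  intros Hm. rewrite back_split, back_periodic_m by auto. f_equal.
  apply back_ext. intros i. unfold shift. apply periodic_shift; auto.
Qed.


Lemma orbA f0 f1 (inc0 : forall x y, I01 x -> I01 y -> x < y -> f0 x < f0 y)
  (dec1 : forall x y, I01 x -> I01 y -> x < y -> f1 x > f1 y)
  (e00 : f0 0 = 0) (e01 : f0 1 = 1) (e11 : f1 1 = 0) (e10 : f1 0 < 1) :
  forall w x, 0 < x < 1 -> 0 < fword f0 f1 w x < 1.
Proof.
  assert (H0: I01 0) by (unfold I01; lra). assert (H1: I01 1) by (unfold I01; lra).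
  induction w as [|b w IH]; intros x Hx; [exact Hx|].
  change (fword f0 f1 (b :: w) x) with (fword f0 f1 w (fsym f0 f1 b x)).
  apply IH. assert (Hx': I01 x) by (unfold I01; lra). destruct b; simpl.
  - pose proof (dec1 x 1 Hx' H1 ltac:(lra)). pose proof (dec1 0 x H0 Hx' ltac:(lra)). lra.
  - pose proof (inc0 x 1 Hx' H1 ltac:(lra)). pose proof (inc0 0 x H0 Hx' ltac:(lra)). lra.
Qed.

Lemma orbD f0 f1 (m0 : maps01 f0) (m1 : maps01 f1)
  (inc0 : forall x y, I01 x -> I01 y -> x < y -> f0 x < f0 y)
  (dec1 : forall x y, I01 x -> I01 y -> x < y -> f1 x > f1 y)
  (e01 : f0 1 = 1) (e10 : f1 0 < 1) :
  forall w x, 0 <= x < 1 -> 0 <= fword f0 f1 w x < 1.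
Proof.
  assert (H0: I01 0) by (unfold I01; lra). assert (H1: I01 1) by (unfold I01; lra).
  induction w as [|b w IH]; intros x Hx; [exact Hx|].
  change (fword f0 f1 (b :: w) x) with (fword f0 f1 w (fsym f0 f1 b x)).
  apply IH. assert (Hx': I01 x) by (unfold I01; lra). destruct b; simpl.
  - pose proof (m1 x Hx'). unfold I01 in *. destruct (Req_dec x 0).
    + subst; lra.
    + pose proof (dec1 0 x H0 Hx' ltac:(lra)). lra.
  - pose proof (m0 x Hx'). unfold I01 in *. pose proof (inc0 x 1 Hx' H1 ltac:(lra)). lra.
Qed.

Lemma orbB f0 f1 (m0 : maps01 f0) (m1 : maps01 f1)
  (inc0 : forall x y, I01 x -> I01 y -> x < y -> f0 x < f0 y)
  (dec1 : forall x y, I01 x -> I01 y -> x < y -> f1 x > f1 y)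
  (e00 : f0 0 = 0) (e01 : f0 1 = 1) (e11 : f1 1 = 0) (e10 : f1 0 < 1) :
  forall w, In true w -> 0 < fword f0 f1 w 0 < 1.
Proof.
  assert (H0: I01 0) by (unfold I01; lra). assert (H1: I01 1) by (unfold I01; lra).
  induction w as [|b w IH]; intros Hin; [destruct Hin|].
  change (fword f0 f1 (b :: w) 0) with (fword f0 f1 w (fsym f0 f1 b 0)).
  destruct b; simpl.
  - apply orbA; auto. pose proof (dec1 0 1 H0 H1 ltac:(lra)). lra.
  - rewrite e00. apply IH. destruct Hin as [E|E]; [discriminate|auto].
Qed.

Lemma orbC f0 f1 (m0 : maps01 f0) (m1 : maps01 f1)
  (inc0 : forall x y, I01 x -> I01 y -> x < y -> f0 x < f0 y)
  (dec1 : forall x y, I01 x -> I01 y -> x < y -> f1 x > f1 y)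
  (e00 : f0 0 = 0) (e01 : f0 1 = 1) (e11 : f1 1 = 0) (e10 : f1 0 < 1) :
  forall w, In true w -> fword f0 f1 w 1 < 1.
Proof.
  induction w as [|b w IH]; intros Hin; [destruct Hin|].
  change (fword f0 f1 (b :: w) 1) with (fword f0 f1 w (fsym f0 f1 b 1)).
  destruct b; simpl.
  - rewrite e11. apply (orbD f0 f1); auto; lra.
  - rewrite e01. apply IH. destruct Hin as [E|E]; [discriminate|auto].
Qed.

Theorem lemma3p25 (f0 f1 : R -> R)
  (beta lambda a0 b0 a1 b1 alpha : R) (N : nat) (gamma' gamma alphabar : R)
  (H : standing_hyps f0 f1 beta lambda a0 b0 a1 b1 alpha N gamma' gamma alphabar)
  (w : list bool) (Hm : (1 <= length w)%nat) (Hnz : In true w)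
  (q : R) (Hq01 : I01 q) (Hqfix : fword f0 f1 w q = q)
  (Hqrep : Rabs (Derive (fword f0 f1 w) q) > 1) :
  exists a b p pt : R,
    a < b /\
    (forall y, adm_domain f0 f1 (periodic_seq w) y <-> a <= y <= b) /\
    a <= p /\ p < q /\ q < pt /\ pt <= b /\
    fword f0 f1 w (fword f0 f1 w p) = p /\
    fword f0 f1 w (fword f0 f1 w pt) = pt.
Proof.
  destruct H as (HC0 & HC1 & Hm0 & Hm1 & _ & _ & Hinc0 & Hfix0 & _ & _ & _ & _ & _ & _ & _ & _
    & _ & _ & _ & _ & _ & _ & _ & _ & _ & Hdec1 & _ & _ & Hgam & _ & Hgam1 & _ & _ & Hf11 & _ & _).
  assert (I0: I01 0) by (unfold I01; lra). assert (I1: I01 1) by (unfold I01; lra).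
  assert (G0 : good f0). { split; [exact Hm0|split; [apply HC0|left; exact Hinc0]]. }
  assert (G1 : good f1). { split; [exact Hm1|split; [apply HC1|right; exact Hdec1]]. }
  assert (e00 : f0 0 = 0) by (apply Hfix0; auto).
  assert (e01 : f0 1 = 1) by (apply Hfix0; auto).
  assert (e10 : f1 0 < 1).
  { destruct (MVT_gen f1 0 1 (Derive f1)) as [c [Hc Hc']]; cbv zeta in *;
      rewrite ?Rmin_left, ?Rmax_right in * by lra.
    - intros x Hx. apply Derive_correct. apply (proj1 HC1). unfold I01; lra.
    - intros x Hx. apply exd_cont. apply (proj1 HC1). unfold I01; lra.
    - assert (Ic : I01 c) by (unfold I01; lra). specialize (Hgam c Ic).
      pose proof (Rle_abs (- Derive f1 c)). rewrite Rabs_Ropp in H. lra. }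
  set (g := fword f0 f1 w) in *.
  assert (Gg : good g) by (apply good_fword; auto).
  assert (Hq0 : q <> 0).
  { intro E. subst q. pose proof (orbB f0 f1 Hm0 Hm1 Hinc0 Hdec1 e00 e01 Hf11 e10 w Hnz).
    fold g in H. lra. }
  assert (Hq1 : q <> 1).
  { intro E. subst q. pose proof (orbC f0 f1 Hm0 Hm1 Hinc0 Hdec1 e00 e01 Hf11 e10 w Hnz).
    fold g in H. lra. }
  assert (Hq : 0 < q < 1) by (unfold I01 in Hq01; lra).
  set (L := Derive g q) in *.
  assert (HL : derivable_pt_lim g q L).
  { apply is_derive_Reals. apply Derive_correct. apply (proj1 (proj2 Gg)). auto. }
  destruct (HL (Rabs L - 1) ltac:(lra)) as [del Hdel].
  assert (repel : forall h, h <> 0 -> Rabs h < del -> Rabs (g (q + h) - q) > Rabs h).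
  { intros h Hh Hhd. specialize (Hdel h Hh Hhd). rewrite Hqfix in Hdel.
    set (D := (g (q + h) - q) / h) in *.
    assert (E : g (q + h) - q = D * h) by (unfold D; field; auto).
    rewrite E, Rabs_mult.
    pose proof (Rabs_triang_inv L (L - D)).
    replace (L - (L - D)) with D in H by ring.
    rewrite Rabs_minus_sym in Hdel.
    pose proof (Rabs_pos_lt h Hh). nra. }
  set (eps := Rmin (del / 2) (Rmin (q / 2) ((1 - q) / 2))).
  assert (Heps : 0 < eps).
  { pose proof (cond_pos del). unfold eps. repeat apply Rmin_glb_lt; lra. }
  assert (Heps1 : eps <= del / 2) by apply Rmin_l.
  assert (Heps2 : eps <= q / 2) by (eapply Rle_trans; [apply Rmin_r|apply Rmin_l]).
  assert (Heps3 : eps <= (1 - q) / 2) by (eapply Rle_trans; [apply Rmin_r|apply Rmin_r]).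
  assert (hp : Rabs (g (q + eps) - q) > eps).
  { assert (Ae : Rabs eps = eps) by (apply Rabs_pos_eq; lra).
    pose proof (repel eps ltac:(lra)). rewrite Ae in H.
    apply H. pose proof (cond_pos del). lra. }
  assert (hm : Rabs (g (q - eps) - q) > eps).
  { assert (Ae : Rabs (- eps) = eps) by (rewrite Rabs_Ropp; apply Rabs_pos_eq; lra).
    pose proof (repel (- eps) ltac:(lra)). rewrite Ae in H.
    replace (q - eps) with (q + - eps) by ring.
    apply H. pose proof (cond_pos del). lra. }
  assert (Ip : I01 (q + eps)) by (unfold I01; lra).
  assert (Im : I01 (q - eps)) by (unfold I01; lra).
  assert (step : forall y, q - eps <= y <= q + eps -> exists z, q - eps <= z <= q + eps /\ g z = y).
  { intros y Hy. apply IVT2; try lra.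
    - intros t Ht. apply exd_cont. apply (proj1 (proj2 Gg)). unfold I01; lra.
    - destruct Gg as [_ [_ [C|C]]].
      + pose proof (C q (q + eps) Hq01 Ip ltac:(lra)). pose proof (C (q - eps) q Im Hq01 ltac:(lra)).
        rewrite Hqfix in *. left.
        unfold Rabs in hp, hm. destruct (Rcase_abs (g (q + eps) - q)); destruct (Rcase_abs (g (q - eps) - q)); lra.
      + pose proof (C q (q + eps) Hq01 Ip ltac:(lra)). pose proof (C (q - eps) q Im Hq01 ltac:(lra)).
        rewrite Hqfix in *. right.
        unfold Rabs in hp, hm. destruct (Rcase_abs (g (q + eps) - q)); destruct (Rcase_abs (g (q - eps) - q)); lra. }
  set (xi := periodic_seq w).
  set (m := length w) in *.
  set (Bk := back_comp f0 f1 xi).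
  assert (GB : forall k, good (Bk k)) by (intros; apply good_back; auto).
  assert (nest : forall k j x, I01 x -> exists x', I01 x' /\ Bk (j + k)%nat x = Bk k x').
  { intros k j x Hx. exists (back_comp f0 f1 (shift k xi) j x). split.
    - apply (good_back f0 f1 (shift k xi) j G0 G1). auto.
    - apply back_split. }
  assert (addm : forall k x, Bk (k + m)%nat x = g (Bk k x)).
  { intros k x. apply back_periodic_add; auto. }
  assert (gpow : forall j y, q - eps <= y <= q + eps -> exists x, I01 x /\ Bk (j * m)%nat x = y).
  { induction j as [|j IH]; intros y Hy.
    - exists y. split; [unfold I01; lra|reflexivity].
    - destruct (step y Hy) as [z [Hz Hz']]. destruct (IH z Hz) as [x [Hx Hx']].
      exists x. split; auto. replace (S j * m)%nat with (j * m + m)%nat by lia.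
      rewrite addm, Hx'. auto. }
  assert (nb : forall k y, q - eps <= y <= q + eps -> exists x, I01 x /\ Bk k x = y).
  { intros k y Hy. destruct (gpow k y Hy) as [x [Hx Hx']].
    replace (k * m)%nat with ((k * m - k) + k)%nat in Hx' by nia.
    destruct (nest k (k * m - k)%nat x Hx) as [x' [Hx'1 Hx'2]].
    exists x'. split; auto. rewrite <- Hx'2. auto. }
  set (lo := fun k => Rmin (Bk k 0) (Bk k 1)).
  set (hi := fun k => Rmax (Bk k 0) (Bk k 1)).
  assert (admE : forall y, adm_domain f0 f1 xi y <-> forall k, (1 <= k)%nat -> lo k <= y <= hi k).
  { intros y. unfold adm_domain. split; intros Hk k Hk1; apply (good_image (Bk k) (GB k)); apply Hk; auto. }
  assert (lo1 : forall k, lo k <= 1).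
  { intros k. unfold lo. destruct (GB k) as [A _]. pose proof (A 0 I0). unfold I01 in H.
    pose proof (Rmin_l (Bk k 0) (Bk k 1)). lra. }
  assert (hi0 : forall k, 0 <= hi k).
  { intros k. unfold hi. destruct (GB k) as [A _]. pose proof (A 0 I0). unfold I01 in H.
    pose proof (Rmax_l (Bk k 0) (Bk k 1)). lra. }
  destruct (completeness (fun r => exists k, (1 <= k)%nat /\ r = lo k)) as [a Ha].
  { exists 1. intros r [k [_ ->]]. auto. }
  { exists (lo 1%nat). exists 1%nat; split; auto. }
  destruct (completeness (fun r => exists k, (1 <= k)%nat /\ r = - hi k)) as [nb' Hb].
  { exists 0. intros r [k [_ ->]]. specialize (hi0 k). lra. }
  { exists (- hi 1%nat). exists 1%nat; split; auto. }
  set (b := - nb').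
  assert (adm_iff : forall y, adm_domain f0 f1 xi y <-> a <= y <= b).
  { intros y. rewrite admE. split.
    - intros Hk. split.
      + apply (proj2 Ha). intros r [k [Hk1 ->]]. apply Hk; auto.
      + assert (nb' <= - y). { apply (proj2 Hb). intros r [k [Hk1 ->]]. specialize (Hk k Hk1). lra. }
        unfold b; lra.
    - intros Hy k Hk1. split.
      + assert (lo k <= a) by (apply (proj1 Ha); exists k; auto). lra.
      + assert (- hi k <= nb') by (apply (proj1 Hb); exists k; auto). unfold b in Hy; lra. }
  assert (Nadm : forall y, q - eps <= y <= q + eps -> adm_domain f0 f1 xi y).
  { intros y Hy k Hk. apply (nb k y Hy). }
  assert (Ha1 : a <= q - eps) by (apply adm_iff, Nadm; lra).
  assert (Hb1 : q + eps <= b) by (apply adm_iff, Nadm; lra).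
  assert (adm01 : forall y, adm_domain f0 f1 xi y -> I01 y).
  { intros y Hy. destruct (Hy 1%nat (le_n 1)) as [x [Hx <-]]. apply (GB 1%nat); auto. }
  assert (ginv : forall y, adm_domain f0 f1 xi y -> adm_domain f0 f1 xi (g y)).
  { intros y Hy k Hk. destruct (Hy k Hk) as [x [Hx <-]]. rewrite <- addm.
    rewrite Nat.add_comm. destruct (nest k m x Hx) as [x' [Hx' E]]. exists x'; auto. }
  assert (ginj : forall x y, I01 x -> I01 y -> g x = g y -> x = y).
  { intros x y Hx Hy E. destruct Gg as [_ [_ C]].
    destruct (Rtotal_order x y) as [Hl|[Hl|Hl]]; auto; exfalso;
    destruct C as [C|C]; [pose proof (C x y Hx Hy Hl)|pose proof (C x y Hx Hy Hl)
      |pose proof (C y x Hy Hx Hl)|pose proof (C y x Hy Hx Hl)]; lra. }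
  assert (gsurj : forall y, adm_domain f0 f1 xi y -> exists z, adm_domain f0 f1 xi z /\ g z = y).
  { intros y Hy. destruct (Hy (1 + m)%nat ltac:(lia)) as [x1 [Hx1 E1]].
    rewrite addm in E1. exists (Bk 1%nat x1). split; auto.
    intros k Hk. destruct (Hy (k + m)%nat ltac:(lia)) as [xk [Hxk Ek]].
    rewrite addm in Ek. exists xk. split; auto.
    apply ginj. apply (GB k); auto. apply (GB 1%nat); auto. transitivity y; [exact Ek|symmetry; exact E1]. }
  assert (aA : adm_domain f0 f1 xi a) by (apply adm_iff; lra).
  assert (bA : adm_domain f0 f1 xi b) by (apply adm_iff; lra).
  exists a, b, a, b.
  split; [lra|]. split; [exact adm_iff|].
  do 4 (split; [lra|]).
  pose proof (adm_iff (g a)) as Ega. pose proof (adm_iff (g b)) as Egb.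
  pose proof (ginv a aA) as ga. pose proof (ginv b bA) as gb.
  apply Ega in ga. apply Egb in gb.
  destruct (gsurj a aA) as [za [zaA Eza]]. destruct (gsurj b bA) as [zb [zbA Ezb]].
  apply adm_iff in zaA. apply adm_iff in zbA.
  assert (Ia : I01 a) by auto. assert (Ib : I01 b) by auto.
  assert (Iza : I01 za) by (apply adm01, adm_iff; lra).
  assert (Izb : I01 zb) by (apply adm01, adm_iff; lra).
  destruct (good_weak g Gg) as [W|W].
  - pose proof (W a za Ia Iza (proj1 zaA)). pose proof (W zb b Izb Ib (proj2 zbA)).
    assert (g a = a) by lra. assert (g b = b) by lra.
    split; congruence.
  - pose proof (W a zb Ia Izb (proj1 zbA)). pose proof (W za b Iza Ib (proj2 zaA)).
    assert (g a = b) by lra. assert (g b = a) by lra.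
    split; congruence.
Qed.
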